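(* Let $(X,f,q_X)$ and $(Y,g,q_Y)$ be partially observable systems and suppose there is a morphism $(m,n):(X,f,q_X)\to(Y,g,q_Y)$ in $\mathbf{PSys}$. Then $\tilde h(X,f,q_X)\geq \tilde h(Y,g,q_Y)$. Equivalently, the assignment $(X,f,q)\mapsto \tilde h(X,f,q)$ defines a functor from $\mathbf{PSys}$ to the ordered set $([0,\infty],\geq)$ viewed as a thin category.
   Context: A dynamical system is a pair $(X,f)$ with $X$ a compact Hausdorff space and $f:X\to X$ a continuous surjection. A partially observable system is a triple $(X,f,q_X)$ where $(X,f)$ is a dynamical system and $q_X:X\to\tilde X$ is a continuous surjection onto a compact Hausdorff space $\tilde X$. A morphism $(X,f,q_X)\to(Y,g,q_Y)$ in the category $\mathbf{PSys}$ is a pair $(m,n)$ of continuous surjections $m:X\to Y$, $n:\tilde X\to\tilde Y$ with $m\circ f=g\circ m$ and $n\circ q_X=q_Y\circ m$. For a sequence of positive numbers $x_t$, $\mathrm{GR}_t(x_t)=\limsup_{t\to\infty}\frac1t\ln x_t$. For an open cover $\mathcal C$, $\#\mathcal C$ is the minimal cardinality of a finite subcover, and $\mathcal A\vee\mathcal B=\{A\cap B\}_{A\in\mathcal A,B\in\mathcal B}$. The quotient-topological entropy is $\tilde h(X,f,q)=\sup\{\mathrm{GR}_n(\#\bigvee_{i=0}^n f^{-i}(q^{-1}\mathcal U)) : \mathcal U \text{ an open cover of } \tilde X\}$, i.e. the supremum over open covers of $X$ in the topology induced by $q$. *)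

(* Defs.v *)
From HB Require Import structures.
From mathcomp Require Import all_boot all_order all_algebra.
From mathcomp Require Import all_classical all_reals all_analysis.
Set Implicit Arguments. Unset Strict Implicit. Unset Printing Implicit Defensive.
Import Order.TTheory GRing.Theory Num.Theory.
Local Open Scope classical_set_scope.
Local Open Scope ring_scope.

Definition dyn_system (X : topologicalType) (f : X -> X) : Prop :=
  compact [set: X] /\ hausdorff_space X /\ continuous f /\
  (forall y : X, exists x, f x = y).

Definition pobs_system (X Xt : topologicalType) (f : X -> X) (q : X -> Xt) : Prop :=
  dyn_system f /\ compact [set: Xt] /\ hausdorff_space Xt /\ continuous q /\
  (forall y : Xt, exists x, q x = y).

Definition psys_morphism (X Xt Y Yt : topologicalType) (f : X -> X) (qX : X -> Xt)
  (g : Y -> Y) (qY : Y -> Yt) (m : X -> Y) (n : Xt -> Yt) : Prop :=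
  continuous m /\ (forall y : Y, exists x, m x = y) /\
  continuous n /\ (forall y : Yt, exists x, n x = y) /\
  (forall x, m (f x) = g (m x)) /\ (forall x, n (qX x) = qY (m x)).

Definition open_cover (T : topologicalType) (U : set (set T)) : Prop :=
  (forall B, U B -> open B) /\ \bigcup_(B in U) B = [set: T].

Definition pull_cover (T S : Type) (h : T -> S) (U : set (set S)) : set (set T) :=
  [set h @^-1` B | B in U].

Definition join_cover (T : Type) (A B : set (set T)) : set (set T) :=
  [set a `&` b | a in A & b in B].

Fixpoint dyn_join (X Xt : Type) (f : X -> X) (q : X -> Xt) (U : set (set Xt)) (n : nat)
  : set (set X) :=
  match n with
  | 0 => pull_cover q U
  | k.+1 => join_cover (dyn_join f q U k) (pull_cover (q \o iter k.+1 f) U)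
  end.

Definition cover_num (R : realType) (T : Type) (C : set (set T)) : \bar R :=
  ereal_inf [set (n%:R)%:E | n in
    [set n : nat | exists s : seq (set T), size s = n /\
       (forall B, B \in s -> C B) /\ \bigcup_(B in [set B | B \in s]) B = [set: T]]].

Definition growth_rate (R : realType) (x : nat -> R) : \bar R :=
  limn_esup (fun t : nat => ((ln (x t)) / t%:R)%:E).

Definition qt_entropy (R : realType) (X Xt : topologicalType) (f : X -> X) (q : X -> Xt)
  : \bar R :=
  ereal_sup [set growth_rate (fun n => fine (cover_num R (dyn_join f q U n)))
             | U in [set U : set (set Xt) | open_cover U]].

(* Main.v *)
Require Import Defs.
From mathcomp Require Import all_boot all_order all_algebra.
From mathcomp Require Import all_classical all_reals all_analysis.
Local Open Scope classical_set_scope.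
Local Open Scope ereal_scope.

Lemma dyn_join_pull (X Xt Y Yt : Type) (f : X -> X) (qX : X -> Xt) (g : Y -> Y)
  (qY : Y -> Yt) (m : X -> Y) (n : Xt -> Yt) (U : set (set Yt)) :
  (forall x, m (f x) = g (m x)) -> (forall x, n (qX x) = qY (m x)) ->
  forall k, dyn_join f qX (pull_cover n U) k = pull_cover m (dyn_join g qY U k).
Proof.
move=> hf hq.
have hit : forall k x, m (iter k f x) = iter k g (m x).
  by elim=> [|k IH] x //=; rewrite hf IH.
elim=> [|k IH] /=.
  apply/seteqP; split => A /=.
    move=> [B [C UC <-] <-]; exists (qY @^-1` C); first by exists C.
    by apply/seteqP; split => x /=; rewrite hq.
  move=> [B [C UC <-] <-]; exists (n @^-1` C); first by exists C.
  by apply/seteqP; split => x /=; rewrite hq.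
rewrite IH /join_cover /pull_cover.
apply/seteqP; split => A /=.
  move=> [a [b Db <-] [c [C' [C UC <-] <-] <-]].
  exists (b `&` (qY \o iter k.+1 g) @^-1` C).
    by exists b => //; exists ((qY \o iter k.+1 g) @^-1` C) => //; exists C.
  have e : forall x, n (qX (iter k.+1 f x)) = qY (iter k.+1 g (m x)).
    by move=> x; rewrite hq hit.
  by apply/seteqP; split => x /=; rewrite -e.
move=> [B [b Db [c [C UC <-] <-]] <-].
exists (m @^-1` b); first by exists b.
exists ((qX \o iter k.+1 f) @^-1` (n @^-1` C)); first by exists (n @^-1` C) => //; exists C.
have e : forall x, n (qX (iter k.+1 f x)) = qY (iter k.+1 g (m x)).
  by move=> x; rewrite hq hit.
by apply/seteqP; split => x /=; rewrite e.
Qed.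

Lemma cover_num_pull (R : realType) (X Y : Type) (m : X -> Y) (C : set (set Y)) :
  (forall y, exists x, m x = y) ->
  cover_num R (pull_cover m C) = cover_num R C.
Proof.
move=> msurj; rewrite /cover_num; congr ereal_inf; congr image.
apply/seteqP; split => k /= [s [sz [hs hu]]].
- have [t [tsz [ht ts]]] : exists t : seq (set Y), size t = size s /\
     (forall B, B \in t -> C B) /\ map (preimage m) t = s.
    elim: s {sz hu} hs => [|A s IH] hs; first by exists [::].
    have [|t [tsz [ht ts]]] := IH.
      by move=> B Bs; apply: hs; rewrite in_cons Bs orbT.
    have [B CB BA] : pull_cover m C A by apply: hs; rewrite in_cons eqxx.
    exists (B :: t); split; first by rewrite /= tsz.
    split; last by rewrite /= ts BA.
    by move=> B'; rewrite in_cons => /orP [/eqP -> //|]; exact: ht.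
  exists t; split; first by rewrite tsz.
  split => //; apply/seteqP; split => // y _.
  have [x <-] := msurj y.
  have : [set: X] x by [].
  rewrite -hu => -[A /= As Ax].
  move: As; rewrite -ts => /mapP [B Bt AB].
  by exists B => //; rewrite AB in Ax.
- exists (map (preimage m) s); split; first by rewrite size_map.
  split.
    by move=> A /mapP [B Bs ->]; exists B => //; apply: hs.
  apply/seteqP; split => // x _.
  have : [set: Y] (m x) by [].
  rewrite -hu => -[B /= Bs Bx].
  by exists (m @^-1` B) => //=; apply/mapP; exists B.
Qed.

Theorem mainTheorem1 (R : realType) (X Xt Y Yt : topologicalType)
  (f : X -> X) (qX : X -> Xt) (g : Y -> Y) (qY : Y -> Yt)
  (m : X -> Y) (n : Xt -> Yt) :
  pobs_system f qX -> pobs_system g qY ->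
  psys_morphism f qX g qY m n ->
  qt_entropy R g qY <= qt_entropy R f qX.
Proof.
move=> _ _ [mc [ms [nc [ns [hf hq]]]]].
rewrite /qt_entropy; apply: ereal_sup_le => _ [U [Uo Ucov] <-].
exists (pull_cover n U).
  split.
    by move=> _ [B UB <-]; apply: open_comp => [x _|]; [exact: nc | exact: Uo].
  apply/seteqP; split => // x _.
  have : [set: Yt] (n x) by [].
  rewrite -Ucov => -[B UB Bx].
  by exists (n @^-1` B) => //; exists B.
congr growth_rate; apply: funext => k.
by rewrite (@dyn_join_pull _ _ _ _ f qX g qY m n U hf hq) cover_num_pull.
Qed.
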